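(* In the setting described in the context, for $\mathbf{d}\in\mathbb{R}^p$ and $\mathbf{L}\in\mathbb{R}^{p\times r}$ let $\mathcal{X}_0(\mathbf{L})=\{(\bar{\mathbf{r}},\bar{\mathbf{s}}):(\bar{\mathbf{r}},\bar{\mathbf{s}})\in\arg\min_{\mathbf{r},\mathbf{s}}\hat\ell(\mathbf{d},\mathbf{L},\mathbf{r},\mathbf{s})\}$ be the set of all minimizers. Then: (1) the sub-gradient of $\ell(\mathbf{d},\cdot)$ at $\mathbf{L}$ is $\partial_{\mathbf{L}}\ell(\mathbf{d},\mathbf{L})=\mathrm{conv}\{(\mathbf{L}\mathbf{r}^*+\mathbf{s}^*-\mathbf{d})(\mathbf{r}^* )^T:(\mathbf{r}^*,\mathbf{s}^* )\in\mathcal{X}_0(\mathbf{L})\}$, where $\mathrm{conv}$ denotes the convex hull; (2) this sub-gradient is uniformly bounded, and $\ell(\mathbf{d},\mathbf{L})$ is uniformly Lipschitz in $\mathbf{L}$.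
   Context: Fix integers $p,r\ge 1$ and constants $\lambda_1,\lambda_2>0$. Let $\mathcal{G}$ be a finite collection of subsets of $\{1,\dots,p\}$. For $\mathbf{s}\in\mathbb{R}^p$ and $g\in\mathcal{G}$, let $\mathbf{s}_{|g}$ be the vector equal to $\mathbf{s}$ on indices in $g$ and zero elsewhere, and $\|\mathbf{s}\|_{\ell_1/\ell_\infty}=\sum_{g\in\mathcal{G}}\|\mathbf{s}_{|g}\|_\infty$. Define $\hat\ell(\mathbf{d},\mathbf{L},\mathbf{r},\mathbf{s})=\tfrac12\|\mathbf{d}-\mathbf{L}\mathbf{r}-\mathbf{s}\|_2^2+\tfrac{\lambda_1}{2}\|\mathbf{r}\|_2^2+\lambda_2\|\mathbf{s}\|_{\ell_1/\ell_\infty}$ (for $\mathbf{r}\in\mathbb{R}^r,\mathbf{s}\in\mathbb{R}^p$) and $\ell(\mathbf{d},\mathbf{L})=\min_{\mathbf{r},\mathbf{s}}\hat\ell(\mathbf{d},\mathbf{L},\mathbf{r},\mathbf{s})$. The data vectors $\mathbf{d}$ range over a uniformly bounded set (there is $M$ with $\|\mathbf{d}\|_2\le M$), and $\mathbf{L}$ ranges over a compact set $\mathcal{L}\subset\mathbb{R}^{p\times r}$ (the set containing the iterates of the online algorithm, whose $t$-th iterate is $\mathbf{L}_t=\mathbf{B}_t(\mathbf{A}_t+\lambda_1\mathbf{I})^{-1}$ with $\mathbf{A}_t=\sum_{i\le t}\mathbf{r}_i\mathbf{r}_i^T$, $\mathbf{B}_t=\sum_{i\le t}(\mathbf{d}_i-\mathbf{s}_i)\mathbf{r}_i^T$,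 and $(\mathbf{r}_i,\mathbf{s}_i)$ a minimizer of $\hat\ell(\mathbf{d}_i,\mathbf{L}_{i-1},\cdot,\cdot)$). ''Uniformly'' means with constants independent of $\mathbf{d}$ and $\mathbf{L}$ in these sets. *)

(* Defs.v *)
From HB Require Import structures.
From mathcomp Require Import all_boot all_order all_algebra.
From mathcomp Require Import all_classical all_reals all_analysis.
Set Implicit Arguments. Unset Strict Implicit. Unset Printing Implicit Defensive.
Import Order.TTheory GRing.Theory Num.Theory.
Import numFieldNormedType.Exports.
Local Open Scope classical_set_scope.
Local Open Scope ring_scope.

Section Defs.
Variable R : realType.

(* Frobenius inner product and (Euclidean / Frobenius) norm of matrices;
   vectors are column matrices 'cV_n = 'M_(n,1). *)
Definition mdot (m n : nat) (A B : 'M[R]_(m, n)) : R :=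
  \sum_(i < m) \sum_(j < n) A i j * B i j.
Definition fnorm (m n : nat) (A : 'M[R]_(m, n)) : R := Num.sqrt (mdot A A).

Definition ginf_norm (p : nat) (s : 'cV[R]_p) (g : {set 'I_p}) : R :=
  \big[Num.max/0]_(i in g) `|s i 0|.

Definition l1linf (p : nat) (G : {set {set 'I_p}}) (s : 'cV[R]_p) : R :=
  \sum_(g in G) ginf_norm s g.

Definition lhat (p r : nat) (lam1 lam2 : R) (G : {set {set 'I_p}})
  (d : 'cV[R]_p) (L : 'M[R]_(p, r)) (rv : 'cV[R]_r) (s : 'cV[R]_p) : R :=
  2^-1 * fnorm (d - L *m rv - s) ^+ 2 + lam1 / 2 * fnorm rv ^+ 2
  + lam2 * l1linf G s.

(* ell(d, L) = min_{r,s} \hat ell(d, L, r, s), written as the infimum of the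
   set of attained values (this infimum is attained). *)
Definition ell (p r : nat) (lam1 lam2 : R) (G : {set {set 'I_p}})
  (d : 'cV[R]_p) (L : 'M[R]_(p, r)) : R :=
  inf [set lhat lam1 lam2 G d L rs.1 rs.2 | rs in [set: 'cV[R]_r * 'cV[R]_p]].

Definition X0 (p r : nat) (lam1 lam2 : R) (G : {set {set 'I_p}})
  (d : 'cV[R]_p) (L : 'M[R]_(p, r)) : set ('cV[R]_r * 'cV[R]_p) :=
  [set rs | forall (r' : 'cV[R]_r) (s' : 'cV[R]_p),
      lhat lam1 lam2 G d L rs.1 rs.2 <= lhat lam1 lam2 G d L r' s'].

Definition conv_hull (m n : nat) (S : set 'M[R]_(m, n)) : set 'M[R]_(m, n) :=
  [set X | exists (k : nat) (w : 'I_k -> R) (P : 'I_k -> 'M[R]_(m, n)),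
      (forall i, 0 <= w i) /\ \sum_(i < k) w i = 1 /\ (forall i, S (P i)) /\
      X = \sum_(i < k) w i *: P i].

(* Clarke's generalized directional derivative, in the form
   <xi, V> <= f^o(L; V) := limsup_{Y -> L, t -> 0+} (f(Y + tV) - f(Y)) / t,
   unfolded via the definition of limsup. *)
Definition le_clarke_dd (m n : nat) (f : 'M[R]_(m, n) -> R)
  (L V : 'M[R]_(m, n)) (a : R) : Prop :=
  forall eps delta : R, 0 < eps -> 0 < delta ->
    exists (Y : 'M[R]_(m, n)) (t : R),
      fnorm (Y - L) < delta /\ 0 < t < delta /\
      a - eps <= (f (Y + t *: V) - f Y) / t.

Definition clarke_subdiff (m n : nat) (f : 'M[R]_(m, n) -> R)
  (L : 'M[R]_(m, n)) : set 'M[R]_(m, n) :=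
  [set xi | forall V : 'M[R]_(m, n), le_clarke_dd f L V (mdot xi V)].

End Defs.

(* Main.v *)
Require Import Defs.
From HB Require Import structures.
From mathcomp Require Import all_boot all_order all_algebra.
From mathcomp Require Import all_classical all_reals all_analysis.
From mathcomp Require Import ring lra.
Import Order.TTheory GRing.Theory Num.Theory.
Import numFieldNormedType.Exports.
Local Open Scope classical_set_scope.
Local Open Scope ring_scope.
Set Implicit Arguments. Unset Strict Implicit.



Section Mdot.
Variable R : realType.

Lemma sumCS (I : finType) (f g : I -> R) :
  (\sum_i f i * g i) ^+ 2 <= (\sum_i f i ^+ 2) * (\sum_i g i ^+ 2).
Proof.
set a := \sum_i f i ^+ 2; set b := \sum_i f i * g i; set c := \sum_i g i ^+ 2.
have a0 : 0 <= a by apply: sumr_ge0 => i _; exact: sqr_ge0.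
have H : 0 <= \sum_i (a * g i - b * f i) ^+ 2 by apply: sumr_ge0 => i _; exact: sqr_ge0.
have E : \sum_i (a * g i - b * f i) ^+ 2 = a * (a * c - b ^+ 2).
  rewrite (eq_bigr (fun i => a^+2 * g i ^+ 2 - (2 * a * b) * (f i * g i) + b ^+ 2 * f i ^+ 2)); last first.
    by move=> i _; ring.
  rewrite big_split /= sumrB -!mulr_sumr -/a -/b -/c; ring.
rewrite E in H.
have [a00|a0'] := eqVneq a 0.
  have f0 : forall i, f i = 0.
    move=> i; have := @psumr_eq0P _ _ predT (fun i => f i ^+ 2) (fun i _ => sqr_ge0 (f i)) a00 i isT.
    by move/eqP; rewrite sqrf_eq0 => /eqP.
  have -> : b = 0 by rewrite /b big1 // => i _; rewrite f0 mul0r.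
  by rewrite expr0n /= a00 mul0r.
have ap : 0 < a by rewrite lt_def a0' a0.
by rewrite -subr_ge0; move: H; rewrite pmulr_rge0.
Qed.

Variables m n : nat.
Implicit Types A B C : 'M[R]_(m, n).

Lemma mulr_self_ge0_hack (x : R) : 0 <= x * x.
Proof. by rewrite -expr2 sqr_ge0. Qed.

Lemma mdotE A B : mdot A B = \sum_(ij : 'I_m * 'I_n) A ij.1 ij.2 * B ij.1 ij.2.
Proof. by rewrite /mdot pair_big. Qed.

Lemma mdotC A B : mdot A B = mdot B A.
Proof. by rewrite /mdot; apply: eq_bigr => i _; apply: eq_bigr => j _; rewrite mulrC. Qed.

Lemma mdotDl A B C : mdot (A + B) C = mdot A C + mdot B C.
Proof.
rewrite /mdot -big_split; apply: eq_bigr => i _; rewrite -big_split.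
by apply: eq_bigr => j _; rewrite !mxE mulrDl.
Qed.

Lemma mdotZl c A B : mdot (c *: A) B = c * mdot A B.
Proof.
rewrite /mdot mulr_sumr; apply: eq_bigr => i _; rewrite mulr_sumr.
by apply: eq_bigr => j _; rewrite !mxE mulrA.
Qed.

Lemma mdotNl A B : mdot (- A) B = - mdot A B.
Proof. by rewrite -scaleN1r mdotZl mulN1r. Qed.

Lemma mdotBl A B C : mdot (A - B) C = mdot A C - mdot B C.
Proof. by rewrite mdotDl mdotNl. Qed.

Lemma mdotDr A B C : mdot A (B + C) = mdot A B + mdot A C.
Proof. by rewrite mdotC mdotDl !(mdotC A). Qed.
Lemma mdotZr c A B : mdot A (c *: B) = c * mdot A B.
Proof. by rewrite mdotC mdotZl mdotC. Qed.
Lemma mdotNr A B : mdot A (- B) = - mdot A B.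
Proof. by rewrite mdotC mdotNl mdotC. Qed.
Lemma mdotBr A B C : mdot A (B - C) = mdot A B - mdot A C.
Proof. by rewrite mdotDr mdotNr. Qed.

Lemma mdot0l A : mdot 0 A = 0.
Proof. by rewrite -(scale0r (0 : 'M[R]_(m,n))) mdotZl mul0r. Qed.

Lemma mdot_ge0 A : 0 <= mdot A A.
Proof. by rewrite mdotE; apply: sumr_ge0 => i _; rewrite -expr2 sqr_ge0. Qed.

Lemma mdot_eq0 A : mdot A A = 0 -> A = 0.
Proof.
rewrite mdotE => H; apply/matrixP => i j; rewrite mxE.
have := @psumr_eq0P _ _ predT (fun ij : 'I_m * 'I_n => A ij.1 ij.2 * A ij.1 ij.2)
   (fun ij _ => (mulr_self_ge0_hack _)) H (i, j) isT.
by move/eqP; rewrite mulf_eq0 orbb => /eqP.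
Qed.

Lemma mdotCS A B : mdot A B ^+ 2 <= mdot A A * mdot B B.
Proof.
rewrite !mdotE.
have := sumCS (fun ij : 'I_m * 'I_n => A ij.1 ij.2) (fun ij => B ij.1 ij.2).
have E1 : forall C : 'M[R]_(m,n), \sum_(ij : 'I_m * 'I_n) C ij.1 ij.2 * C ij.1 ij.2 = \sum_(ij : 'I_m * 'I_n) C ij.1 ij.2 ^+ 2.
  by move=> C; apply: eq_bigr => *; rewrite expr2.
by rewrite !E1.
Qed.

Lemma fnorm_ge0 A : 0 <= fnorm A.
Proof. exact: sqrtr_ge0. Qed.

Lemma fnorm_sq A : fnorm A ^+ 2 = mdot A A.
Proof. by rewrite /fnorm sqr_sqrtr // mdot_ge0. Qed.

Lemma fnorm0 : fnorm (0 : 'M[R]_(m,n)) = 0.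
Proof. by rewrite /fnorm mdot0l sqrtr0. Qed.

Lemma sq_le_norm (x y : R) : 0 <= y -> x ^+ 2 <= y ^+ 2 -> x <= y.
Proof.
move=> y0 H; apply: le_trans (ler_norm x) _.
by rewrite -(ler_pXn2r (n:=2)) ?nnegrE ?normr_ge0 // real_normK ?num_real.
Qed.

Lemma mdot_le A B : mdot A B <= fnorm A * fnorm B.
Proof.
apply: sq_le_norm; first by rewrite mulr_ge0 ?fnorm_ge0.
by rewrite exprMn !fnorm_sq mdotCS.
Qed.

Lemma mdot_abs_le A B : `|mdot A B| <= fnorm A * fnorm B.
Proof.
rewrite ler_norml mdot_le andbT lerNl -mdotNl.
apply: le_trans (mdot_le _ _) _.
by rewrite /fnorm mdotNl mdotNr opprK.
Qed.

Lemma fnormN A : fnorm (- A) = fnorm A.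
Proof. by rewrite /fnorm mdotNl mdotNr opprK. Qed.

Lemma mdotDD A B : mdot (A + B) (A + B) = mdot A A + 2 * mdot A B + mdot B B.
Proof. rewrite mdotDl !mdotDr (mdotC B A); ring. Qed.

Lemma fnormD A B : fnorm (A + B) <= fnorm A + fnorm B.
Proof.
apply: sq_le_norm; first by rewrite addr_ge0 ?fnorm_ge0.
rewrite fnorm_sq mdotDD sqrrD !fnorm_sq lerD2r lerD2l.
have := mdot_le A B; lra.
Qed.

Lemma fnormZ c A : fnorm (c *: A) = `|c| * fnorm A.
Proof.
by rewrite /fnorm mdotZl mdotZr mulrA -expr2 sqrtrM ?sqr_ge0 // sqrtr_sqr.
Qed.

Lemma fnorm_eq0 A : fnorm A = 0 -> A = 0.
Proof. by move=> H; apply: mdot_eq0; rewrite -fnorm_sq H expr0n. Qed.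

Lemma entry_le A i j : `|A i j| <= fnorm A.
Proof.
apply: sq_le_norm; first exact: fnorm_ge0.
rewrite fnorm_sq mdotE real_normK ?num_real // expr2.
by (rewrite (bigD1 (i, j)) //= lerDl; apply: sumr_ge0 => k _; by rewrite -expr2 sqr_ge0).
Qed.

Lemma fnorm_entries A c : 0 <= c -> (forall i j, `|A i j| <= c) -> fnorm A <= (m * n)%:R * c.
Proof.
move=> c0 H; apply: sq_le_norm; first by rewrite mulr_ge0.
rewrite fnorm_sq mdotE.
apply: (@le_trans _ _ (\sum_(ij : 'I_m * 'I_n) c ^+ 2)).
  apply: ler_sum => ij _; rewrite -expr2 -real_normK ?num_real //.
  by rewrite lerXn2r ?nnegrE ?normr_ge0.
rewrite sumr_const card_prod !card_ord -mulr_natl exprMn.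
have hk : ((m * n)%N%:R : R) <= (m * n)%N%:R ^+ 2.
  rewrite expr2 -natrM ler_nat; case: (m * n)%N => // k.
  by rewrite mulSn leq_addr.
rewrite natrM in hk *.
have := sqr_ge0 c; nra.
Qed.

End Mdot.



Section Prod.
Variable R : realType.

Lemma mdot_mulmx (m n q : nat) (A : 'M[R]_(m, n)) (B : 'M[R]_(n, q)) :
  mdot (A *m B) (A *m B) <= mdot A A * mdot B B.
Proof.
rewrite /mdot mulr_suml; apply: ler_sum => i _.
rewrite (exchange_big _ _ _ _ _ (fun j k => B j k * B j k)) mulr_sumr.
apply: ler_sum => k _; rewrite !mxE -expr2.
have := sumCS (fun j => A i j) (fun j => B j k).
have E1 : forall f : 'I_n -> R, \sum_j f j * f j = \sum_j f j ^+ 2.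
  by move=> f; apply: eq_bigr => *; rewrite expr2.
by rewrite !E1.
Qed.

Lemma fnorm_mulmx (m n q : nat) (A : 'M[R]_(m, n)) (B : 'M[R]_(n, q)) :
  fnorm (A *m B) <= fnorm A * fnorm B.
Proof.
apply: sq_le_norm; first by rewrite mulr_ge0 ?fnorm_ge0.
by rewrite exprMn !fnorm_sq mdot_mulmx.
Qed.

Lemma fnorm_tr (m n : nat) (A : 'M[R]_(m, n)) : fnorm A^T = fnorm A.
Proof.
rewrite /fnorm /mdot exchange_big; congr Num.sqrt.
by apply: eq_bigr => i _; apply: eq_bigr => j _; rewrite !mxE.
Qed.

Lemma mdot_outer (m n : nat) (a : 'M[R]_(m, 1)) (b : 'M[R]_(n, 1)) (V : 'M[R]_(m, n)) :
  mdot (a *m b^T) V = mdot a (V *m b).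
Proof.
rewrite /mdot; apply: eq_bigr => i _; rewrite big_ord1 !mxE mulr_sumr.
apply: eq_bigr => j _; rewrite !mxE big_ord1 !mxE; ring.
Qed.

End Prod.



Section Omega.
Variable R : realType.
Variable p : nat.
Variable G : {set {set 'I_p}}.
Implicit Types (s : 'cV[R]_p) (g : {set 'I_p}) (c : R).

Lemma ginf_ge0 s g : 0 <= ginf_norm s g.
Proof.
rewrite /ginf_norm; elim/big_ind: _ => //.
  by move=> x y x0 y0; rewrite le_max x0.
Qed.

Lemma ginf_le s g c : 0 <= c -> (forall i, i \in g -> `|s i 0| <= c) -> ginf_norm s g <= c.
Proof. by move=> c0 H; rewrite /ginf_norm; apply: bigmax_le. Qed.

Lemma ginf_entry s g i : i \in g -> `|s i 0| <= ginf_norm s g.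
Proof. by move=> ig; rewrite /ginf_norm; apply: (le_bigmax_cond _ (fun i => `|s i 0|) ig). Qed.

Lemma ginf_add s1 s2 g : ginf_norm (s1 + s2) g <= ginf_norm s1 g + ginf_norm s2 g.
Proof.
apply: ginf_le; first by rewrite addr_ge0 ?ginf_ge0.
move=> i ig; rewrite mxE; apply: le_trans (ler_normD _ _) _.
by rewrite lerD ?ginf_entry.
Qed.

Lemma ginf_scale c s g : 0 <= c -> ginf_norm (c *: s) g <= c * ginf_norm s g.
Proof.
move=> c0; apply: ginf_le; first by rewrite mulr_ge0 ?ginf_ge0.
move=> i ig; rewrite mxE normrM ger0_norm //.
by rewrite ler_wpM2l ?ginf_entry.
Qed.

Lemma ginf_fnorm s g : ginf_norm s g <= fnorm s.
Proof. by apply: ginf_le; [exact: fnorm_ge0| move=> i _; exact: entry_le]. Qed.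

Lemma l1linf_ge0 s : 0 <= l1linf G s.
Proof. by apply: sumr_ge0 => g _; exact: ginf_ge0. Qed.

Lemma l1linf_add s1 s2 : l1linf G (s1 + s2) <= l1linf G s1 + l1linf G s2.
Proof. by rewrite /l1linf -big_split; apply: ler_sum => g _; exact: ginf_add. Qed.

Lemma l1linf_scale c s : 0 <= c -> l1linf G (c *: s) <= c * l1linf G s.
Proof. by move=> c0; rewrite /l1linf mulr_sumr; apply: ler_sum => g _; exact: ginf_scale. Qed.

Lemma l1linf_mid s1 s2 :
  l1linf G (2^-1 *: (s1 + s2)) <= 2^-1 * l1linf G s1 + 2^-1 * l1linf G s2.
Proof.
apply: le_trans (l1linf_scale _ _) _; first by rewrite invr_ge0.
by rewrite -mulrDr ler_wpM2l ?invr_ge0 ?l1linf_add.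
Qed.

Lemma l1linf_fnorm s : l1linf G s <= #|G|%:R * fnorm s.
Proof.
rewrite /l1linf; apply: le_trans (ler_sum _ (fun g _ => ginf_fnorm s g)) _.
by rewrite sumr_const mulr_natl.
Qed.

Lemma l1linf_diff s1 s2 : l1linf G s2 - l1linf G s1 <= #|G|%:R * fnorm (s2 - s1).
Proof.
apply: le_trans (l1linf_fnorm _); rewrite lerBlDl.
by have := l1linf_add s1 (s2 - s1); rewrite addrC subrK addrC.
Qed.

Lemma l1linf0 : l1linf G (0 : 'cV[R]_p) = 0.
Proof.
apply/eqP; rewrite eq_le l1linf_ge0 andbT.
by apply: le_trans (l1linf_fnorm _) _; rewrite (@fnorm0 R p 1) mulr0.
Qed.

End Omega.



Section Cauchy.
Variable R : realType.

Lemma cauchy_R (v : nat -> R) (b : nat -> R) :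
  (forall e, 0 < e -> exists N, b N < e) ->
  (forall N n m, (N <= n)%N -> (N <= m)%N -> `|v n - v m| <= b N) ->
  exists l, forall N n, (N <= n)%N -> `|v n - l| <= b N.
Proof.
move=> hb hv.
have cv : cvg (v @ \oo).
  apply/cauchy_cvgP; apply: cauchy_exP => e e0.
  have [N hN] := hb e e0.
  exists (v N); exists N => // n /= Nn.
  rewrite -ball_normE /ball_ /=.
  by apply: le_lt_trans hN; apply: hv.
exists (lim (v @ \oo)) => N n Nn.
rewrite distrC ler_distl; apply/andP; split.
  apply: limr_ge => //; exists N => // k /= Nk.
  have := hv N n k Nn Nk; rewrite ler_distl => /andP[_ h]; lra.
apply: limr_le => //; exists N => // k /= Nk.
have := hv N n k Nn Nk; rewrite ler_distl => /andP[h _]; lra.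
Qed.

Lemma cauchy_M m n (u : nat -> 'M[R]_(m, n)) (b : nat -> R) :
  (forall e, 0 < e -> exists N, b N < e) ->
  (forall N k k', (N <= k)%N -> (N <= k')%N -> fnorm (u k - u k') <= b N) ->
  exists l, forall N k, (N <= k)%N -> fnorm (u k - l) <= (m * n)%:R * b N.
Proof.
move=> hb hu.
have b0 : forall N, 0 <= b N.
  by move=> N; apply: le_trans (hu N N N (leqnn _) (leqnn _)); exact: fnorm_ge0.
have : forall ij : 'I_m * 'I_n, exists l : R, forall N k, (N <= k)%N -> `|u k ij.1 ij.2 - l| <= b N.
  move=> ij; apply: cauchy_R => // N k k' Nk Nk'.
  have := entry_le (u k - u k') ij.1 ij.2; rewrite !mxE => h.
  exact: le_trans h (hu N k k' Nk Nk').
move=> /choice [lf hlf].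
exists (\matrix_(i, j) lf (i, j)) => N k Nk.
apply: fnorm_entries => // i j; rewrite !mxE.
exact: (hlf (i, j) N k Nk).
Qed.

Definition etan (n : nat) : R := ((n.+1)%:R)^-1.

Lemma etan_gt0 n : 0 < etan n.
Proof. by rewrite /etan invr_gt0 ltr0n. Qed.

Lemma etan_le1 n : etan n <= 1.
Proof. by rewrite /etan invf_le1 ?ltr0n // ler1n. Qed.

Lemma etan_mono N n : (N <= n)%N -> etan n <= etan N.
Proof. by move=> Nn; rewrite /etan lef_pV2 ?posrE ?ltr0n // ler_nat ltnS. Qed.

Lemma etan_small e : 0 < e -> exists N, etan N < e.
Proof.
move=> e0; exists (Num.trunc e^-1); rewrite /etan.
have h := truncnS_gt e^-1.
by rewrite -[X in _ < X]invrK ltf_pV2 ?posrE ?invr_gt0 ?ltr0n.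
Qed.

End Cauchy.



Section Main.
Variable R : realType.
Variables p r : nat.
Variables lam1 lam2 : R.
Hypothesis hlam1 : 0 < lam1.
Hypothesis hlam2 : 0 < lam2.
Variable G : {set {set 'I_p}}.
Variable d : 'cV[R]_p.

Notation MM := ('M[R]_(p, r)).
Notation XX := ('cV[R]_r * 'cV[R]_p)%type.
Implicit Types (L H Y V : MM) (x y xL xY : XX).

Definition FF (L : MM) (x : XX) := lhat lam1 lam2 G d L x.1 x.2.
Definition ee (L : MM) (x : XX) : 'cV[R]_p := d - L *m x.1 - x.2.
Definition grad (L : MM) (x : XX) : MM := (L *m x.1 + x.2 - d) *m x.1^T.
Definition NN m n (A : 'M[R]_(m, n)) := mdot A A.

Lemma FF_E L x : FF L x = 2^-1 * NN (ee L x) + lam1 / 2 * NN x.1 + lam2 * l1linf G x.2.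
Proof. by rewrite /FF /lhat !fnorm_sq. Qed.

Lemma NN_ge0 m n (A : 'M[R]_(m, n)) : 0 <= NN A.
Proof. exact: mdot_ge0. Qed.

Lemma FF_ge0 L x : 0 <= FF L x.
Proof.
by rewrite FF_E; rewrite !addr_ge0 ?mulr_ge0 ?NN_ge0 ?l1linf_ge0 ?invr_ge0 ?divr_ge0 ?ltW.
Qed.

Lemma FF0 L : FF L (0, 0) = 2^-1 * NN d.
Proof.
rewrite FF_E /ee /= mulmx0 !subr0 l1linf0 /NN mdot0l.
by rewrite !mulr0 !addr0.
Qed.

Lemma grad_E L x : grad L x = - (ee L x *m x.1^T).
Proof. rewrite /grad /ee -mulNmx; congr (_ *m _); apply/matrixP => i j; rewrite !mxE; ring. Qed.

Lemma mdotDD' m n (A B : 'M[R]_(m, n)) : NN (A + B) = NN A + 2 * mdot A B + NN B.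
Proof. exact: mdotDD. Qed.

Lemma NNN m n (A : 'M[R]_(m, n)) : NN (- A) = NN A.
Proof. by rewrite /NN mdotNl mdotNr opprK. Qed.

Lemma NNB m n (A B : 'M[R]_(m, n)) : NN (A - B) = NN A - 2 * mdot A B + NN B.
Proof. by rewrite mdotDD' NNN mdotNr; ring. Qed.

Lemma NNZ m n c (A : 'M[R]_(m, n)) : NN (c *: A) = c ^+ 2 * NN A.
Proof. by rewrite /NN mdotZl mdotZr mulrA expr2. Qed.

Lemma ee_shift L H x : ee (L + H) x = ee L x - H *m x.1.
Proof. by rewrite /ee mulmxDl opprD addrA; rewrite [d - _ - _ - _]addrAC. Qed.

Lemma FF_shift L H x :
  FF (L + H) x = FF L x + mdot (grad L x) H + 2^-1 * NN (H *m x.1).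
Proof.
rewrite !FF_E ee_shift grad_E mdotNl mdot_outer NNB.
by field.
Qed.

Definition mid (x y : XX) : XX := (2^-1 *: (x.1 + y.1), 2^-1 *: (x.2 + y.2)).

Definition gap L (x y : XX) := NN (L *m (x.1 - y.1) + (x.2 - y.2)) + lam1 * NN (x.1 - y.1).

Lemma ee_mid L x y : ee L (mid x y) = 2^-1 *: (ee L x + ee L y).
Proof.
rewrite /ee /mid /= -scalemxAr mulmxDr.
apply/matrixP => i j; rewrite !mxE.
lra.
Qed.

Lemma ee_diff L x y : ee L x - ee L y = - (L *m (x.1 - y.1) + (x.2 - y.2)).
Proof.
rewrite /ee mulmxBr; apply/matrixP => i j; rewrite !mxE; ring.
Qed.

Lemma NN_mid m n (a b : 'M[R]_(m, n)) :
  NN (2^-1 *: (a + b)) = 2^-1 * NN a + 2^-1 * NN b - 4^-1 * NN (a - b).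
Proof. by rewrite NNZ mdotDD' NNB; field. Qed.

Lemma FF_mid L x y : FF L (mid x y) + 8^-1 * gap L x y <= 2^-1 * FF L x + 2^-1 * FF L y.
Proof.
rewrite !FF_E ee_mid NN_mid ee_diff NNN /gap.
have -> : (mid x y).1 = 2^-1 *: (x.1 + y.1) by [].
rewrite NN_mid.
have := l1linf_mid G x.2 y.2.
have -> : (mid x y).2 = 2^-1 *: (x.2 + y.2) by [].
move=> h.
have := hlam2; nra.
Qed.

Notation ELL L := (ell lam1 lam2 G d L).
Notation XO L := (X0 lam1 lam2 G d L).

Lemma S_lb L : has_lbound [set lhat lam1 lam2 G d L rs.1 rs.2 | rs in [set: XX]].
Proof. by exists 0 => _ [rs _ <-]; exact: (FF_ge0 L rs). Qed.

Lemma S_ne L : nonempty [set lhat lam1 lam2 G d L rs.1 rs.2 | rs in [set: XX]].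
Proof. by exists (FF L (0,0)); exists (0,0). Qed.

Lemma ell_le L x : ELL L <= FF L x.
Proof. by apply: (ge_inf (S_lb L)); exists x. Qed.

Lemma X0_ell L x : XO L x -> FF L x = ELL L.
Proof.
move=> Hx; apply/eqP; rewrite eq_le ell_le andbT.
apply: lb_le_inf; first exact: S_ne.
by move=> _ [rs _ <-]; apply: Hx.
Qed.

Lemma ell_X0 L x : FF L x <= ELL L -> XO L x.
Proof. by move=> H r' s'; apply: le_trans H (ell_le L (r', s')). Qed.

Lemma ell_adh L e : 0 < e -> exists x, FF L x < ELL L + e.
Proof.
move=> e0; have [_ [rs _ <-] H] := inf_adherent e0 (conj (S_ne L) (S_lb L)).
by exists rs.
Qed.

Lemma X0_bounds L x : XO L x -> NN (ee L x) <= NN d /\ lam1 * NN x.1 <= NN d.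
Proof.
move=> Hx; have := Hx 0 0; rewrite -/(FF L x) -/(FF L (0,0)) FF0 FF_E.
have := NN_ge0 (ee L x); have := NN_ge0 x.1; have := l1linf_ge0 G x.2.
move=> h1 h2 h3 h; split.
  have := mulr_ge0 (ltW hlam2) h1; have := mulr_ge0 (ltW hlam1) h2; nra.
have := mulr_ge0 (ltW hlam2) h1; nra.
Qed.

Lemma strong L xL x : XO L xL -> 4^-1 * gap L x xL <= FF L x - ELL L.
Proof.
move=> HL; have := FF_mid L x xL; have := ell_le L (mid x xL).
rewrite (X0_ell HL); lra.
Qed.

Lemma X0_unique L x y : XO L x -> XO L y -> x = y.
Proof.
move=> Hx Hy; have := strong x Hy; rewrite (X0_ell Hx) subrr /gap.
have h1 := NN_ge0 (L *m (x.1 - y.1) + (x.2 - y.2)); have h2 := NN_ge0 (x.1 - y.1).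
move=> h.
have h3 := mulr_ge0 (ltW hlam1) h2.
have e2 : NN (x.1 - y.1) = 0.
  apply/eqP; rewrite eq_le h2 andbT -(pmulr_rle0 _ hlam1); lra.
have e1 : NN (L *m (x.1 - y.1) + (x.2 - y.2)) = 0.
  apply/eqP; rewrite eq_le h1 andbT; lra.
have /eqP d1 := mdot_eq0 e2; rewrite subr_eq0 in d1.
move: e1; rewrite (eqP d1) subrr mulmx0 add0r => /mdot_eq0 /eqP; rewrite subr_eq0 => /eqP d2.
by case: x y d1 d2 {Hx Hy h h1 h2 h3 e2} => [? ?] [? ?] /= /eqP -> ->.
Qed.


Lemma sq_mono (x y : R) : 0 <= x -> x <= y -> x ^+ 2 <= y ^+ 2.
Proof. by move=> x0 xy; nra. Qed.

Lemma sqrt_bound (X c : R) : 0 <= X -> 0 <= c -> X ^+ 2 <= c -> X <= Num.sqrt c.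
Proof. by move=> X0 c0 h; apply: sq_le_norm; rewrite ?sqrtr_ge0 // sqr_sqrtr. Qed.

Lemma sqrt_bound2 (X c e : R) : 0 <= X -> 0 <= c -> 0 <= e -> X ^+ 2 <= c * e ^+ 2 ->
  X <= Num.sqrt c * e.
Proof.
by move=> X0 c0 e0 h; apply: sq_le_norm; rewrite ?mulr_ge0 ?sqrtr_ge0 // exprMn sqr_sqrtr.
Qed.

Lemma ee_perturb L x y : ee L y = ee L x - (L *m (y.1 - x.1) + (y.2 - x.2)).
Proof. rewrite /ee mulmxBr; apply/matrixP => i j; rewrite !mxE; ring. Qed.

Lemma FF_perturb L x y :
  FF L y - FF L x <= 2^-1 * NN (L *m (y.1 - x.1) + (y.2 - x.2))
     + fnorm (ee L x) * fnorm (L *m (y.1 - x.1) + (y.2 - x.2))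
     + lam1 / 2 * NN (y.1 - x.1) + lam1 * (fnorm x.1 * fnorm (y.1 - x.1))
     + lam2 * (#|G|%:R * fnorm (y.2 - x.2)).
Proof.
rewrite !FF_E (ee_perturb L x y).
set w := L *m (y.1 - x.1) + (y.2 - x.2).
rewrite (NNB (ee L x) w).
have -> : NN y.1 = NN x.1 + 2 * mdot x.1 (y.1 - x.1) + NN (y.1 - x.1).
  by rewrite -mdotDD' addrC subrK.
have h1 := mdot_abs_le (ee L x) w.
have h1' := ler_norm (- mdot (ee L x) w); rewrite normrN in h1'.
have h2 := mdot_le x.1 (y.1 - x.1).
have h3 := l1linf_diff G x.2 y.2.
have h2' := ler_wpM2l (ltW hlam1) h2.
have h3' := ler_wpM2l (ltW hlam2) h3.
lra.
Qed.

Lemma ell_ge0 L : 0 <= ELL L.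
Proof. by apply: lb_le_inf; [exact: S_ne | move=> _ [rs _ <-]; exact: (FF_ge0 L rs)]. Qed.

Lemma exists_min L : exists x, XO L x.
Proof.
have : forall n, exists x, FF L x < ELL L + @etan R n ^+ 2.
  move=> n; apply: ell_adh.
by rewrite expr2 mulr_gt0 ?etan_gt0.
move=> /choice [xs hxs].
have gapN : forall N k k', (N <= k)%N -> (N <= k')%N -> gap L (xs k) (xs k') <= 8 * @etan R N ^+ 2.
  move=> N k k' Nk Nk'.
  have := FF_mid L (xs k) (xs k'); have := ell_le L (mid (xs k) (xs k')).
  have := hxs k; have := hxs k'.
  have ek : @etan R k ^+ 2 <= @etan R N ^+ 2.
    by have := etan_mono R Nk; have := etan_gt0 R k; nra.
  have ek' : @etan R k' ^+ 2 <= @etan R N ^+ 2.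
    by have := etan_mono R Nk'; have := etan_gt0 R k'; nra.
  lra.
set a := fnorm L.
have a0 : 0 <= a by exact: fnorm_ge0.
set c1 := Num.sqrt (8 / lam1).
pose c2 : R := Num.sqrt 8.
have c10 : 0 <= c1 by exact: sqrtr_ge0.
have c20 : 0 <= c2 by exact: sqrtr_ge0.
pose k : R := c2 + (1 + a) * c1.
have k0 : 0 <= k by rewrite addr_ge0 ?mulr_ge0 ?addr_ge0.
have bdr : forall N n n', (N <= n)%N -> (N <= n')%N -> fnorm ((xs n).1 - (xs n').1) <= c1 * @etan R N.
  move=> N n n' Nn Nn'; have := gapN N n n' Nn Nn'; rewrite /gap => h.
  apply: sqrt_bound2; [exact: fnorm_ge0 | by rewrite divr_ge0 // ltW | exact: ltW (etan_gt0 _ _) |].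
  rewrite fnorm_sq -/(NN _) mulrAC ler_pdivlMr //.
  have := NN_ge0 (L *m ((xs n).1 - (xs n').1) + ((xs n).2 - (xs n').2)); nra.
have bdw : forall N n n', (N <= n)%N -> (N <= n')%N ->
    fnorm (L *m ((xs n).1 - (xs n').1) + ((xs n).2 - (xs n').2)) <= c2 * @etan R N.
  move=> N n n' Nn Nn'; have := gapN N n n' Nn Nn'; rewrite /gap => h.
  apply: sqrt_bound2; [exact: fnorm_ge0 | by [] | exact: ltW (etan_gt0 _ _) |].
  rewrite fnorm_sq -/(NN _).
  have := mulr_ge0 (ltW hlam1) (NN_ge0 ((xs n).1 - (xs n').1)); nra.
have bds : forall N n n', (N <= n)%N -> (N <= n')%N -> fnorm ((xs n).2 - (xs n').2) <= k * @etan R N.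
  move=> N n n' Nn Nn'.
  set dr := (xs n).1 - (xs n').1; set ds := (xs n).2 - (xs n').2.
  have -> : ds = (L *m dr + ds) - L *m dr by rewrite addrC addKr.
  apply: le_trans (fnormD _ _) _; rewrite fnormN.
  have h1 := bdw N n n' Nn Nn'; have h2 := bdr N n n' Nn Nn'.
  have h3 := fnorm_mulmx L dr.
  have h4 := ler_wpM2l a0 h2.
  rewrite -/a in h3; have h5 := mulr_ge0 c10 (ltW (etan_gt0 R N)).
  rewrite /k; lra.
have bdr' : forall N n n', (N <= n)%N -> (N <= n')%N -> fnorm ((xs n).1 - (xs n').1) <= k * @etan R N.
  move=> N n n' Nn Nn'; apply: le_trans (bdr N n n' Nn Nn') _.
  apply: ler_wpM2r; first exact: ltW (etan_gt0 _ _).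
  by have := mulr_ge0 a0 c10; rewrite /k; lra.
have bsmall : forall e, 0 < e -> exists N, k * @etan R N < e.
  move=> e e0; have k1 : 0 < k + 1 by lra.
  have [N hN] := etan_small (divr_gt0 e0 k1).
  exists N; have := @etan_gt0 R N; move: hN; rewrite ltr_pdivlMr //; nra.
have [lr hlr] := cauchy_M bsmall bdr'.
have [ls hls] := cauchy_M bsmall bds.
exists (lr, ls); apply: ell_X0.
apply/ler_addgt0Pr => e e0.
have l0 := ell_ge0 L.
pose E := Num.sqrt (2 * (ELL L + 1)).
pose E1 := Num.sqrt (2 * (ELL L + 1) / lam1).
have E0 : 0 <= E by exact: sqrtr_ge0.
have E10 : 0 <= E1 by exact: sqrtr_ge0.
pose c0 := ((r * 1)%N%:R + (p * 1)%N%:R) * k.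
have c00 : 0 <= c0 by rewrite mulr_ge0 // addr_ge0.
pose C := 2^-1 * (a + 1) ^+ 2 + E * (a + 1) + lam1 / 2 + lam1 * E1 + lam2 * #|G|%:R.
have C0 : 0 <= C.
  by rewrite /C !addr_ge0 ?mulr_ge0 ?invr_ge0 ?sqr_ge0 ?addr_ge0 ?divr_ge0 // ltW.
have c01 : 0 < c0 + 1 by lra.
have c02 : 0 < C * c0 + 2 by have := mulr_ge0 C0 c00; lra.
have ic : 0 < (c0 + 1)^-1 by rewrite invr_gt0.
have [N1 hN1] := etan_small ic.
have [N2 hN2] := etan_small (divr_gt0 e0 c02).
pose N := maxn N1 N2.
have eN1 : etan R N < (c0 + 1)^-1 by apply: le_lt_trans hN1; apply: etan_mono; exact: leq_maxl.
have eN2 : etan R N < e / (C * c0 + 2) by apply: le_lt_trans hN2; apply: etan_mono; exact: leq_maxr.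
have eN0 := etan_gt0 R N.
have eN3 := etan_le1 R N.
set x := xs N.
set t := c0 * etan R N.
have t0 : 0 <= t by rewrite mulr_ge0 // ltW.
have t1 : t <= 1.
  move: eN1; rewrite -[X in _ < X]div1r ltr_pdivlMr // /t; nra.
have fr : fnorm (lr - x.1) <= t.
  rewrite -fnormN opprB; apply: le_trans (hlr N N (leqnn _)) _.
  rewrite /t /c0 mulrA.
  by have := mulr_ge0 (mulr_ge0 (ler0n R (p * 1)) k0) (ltW eN0); lra.
have fs : fnorm (ls - x.2) <= t.
  rewrite -fnormN opprB; apply: le_trans (hls N N (leqnn _)) _.
  rewrite /t /c0 mulrA.
  by have := mulr_ge0 (mulr_ge0 (ler0n R (r * 1)) k0) (ltW eN0); lra.
set w := L *m ((lr, ls).1 - x.1) + ((lr, ls).2 - x.2).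
have fw : fnorm w <= (a + 1) * t.
  apply: le_trans (fnormD _ _) _; have := fnorm_mulmx L (lr - x.1).
  rewrite -/a /= => h; have := ler_wpM2l a0 fr; lra.
have hx := hxs N; rewrite -/x in hx.
have hx1 : FF L x <= ELL L + 1 by have := etan_le1 R N; nra.
have bE : fnorm (ee L x) <= E.
  apply: sqrt_bound; [exact: fnorm_ge0 | lra | rewrite fnorm_sq -/(NN _)].
  move: hx1; rewrite FF_E.
  have := mulr_ge0 (divr_ge0 (ltW hlam1) (ler0n R 2)) (NN_ge0 x.1).
  have := mulr_ge0 (ltW hlam2) (l1linf_ge0 G x.2); lra.
have bE1 : fnorm x.1 <= E1.
  apply: sqrt_bound; [exact: fnorm_ge0 | by rewrite divr_ge0 ?ltW //; lra | rewrite fnorm_sq -/(NN _)].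
  rewrite ler_pdivlMr //.
  move: hx1; rewrite FF_E.
  have := mulr_ge0 (ler0n R 2) (NN_ge0 (ee L x)).
  have := mulr_ge0 (ltW hlam2) (l1linf_ge0 G x.2); lra.
have hp := FF_perturb L x (lr, ls); rewrite -/w in hp.
have fw0 := fnorm_ge0 w; have fr0 := fnorm_ge0 (lr - x.1); have fs0 := fnorm_ge0 (ls - x.2).
have q1 : NN w <= (a + 1) ^+ 2 * t.
  rewrite /NN -fnorm_sq.
  have : fnorm w ^+ 2 <= ((a + 1) * t) ^+ 2 by apply: sq_mono.
  rewrite exprMn => h; apply: le_trans h _; apply: ler_wpM2l; first exact: sqr_ge0.
  by rewrite expr2 ler_piMr.
have q2 : NN (lr - x.1) <= t.
  rewrite /NN -fnorm_sq; apply: le_trans (_ : t ^+ 2 <= t); last by rewrite expr2 ler_piMr.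
  exact: sq_mono.
have q3 : fnorm (ee L x) * fnorm w <= E * ((a + 1) * t) by apply: ler_pM => //; exact: fnorm_ge0.
have q4 : fnorm x.1 * fnorm (lr - x.1) <= E1 * t by apply: ler_pM => //; exact: fnorm_ge0.
have q4' := ler_wpM2l (ltW hlam1) q4.
have q5 := ler_wpM2l (ltW hlam2) (ler_wpM2l (ler0n R #|G|) fs).
have q2' := ler_wpM2l (divr_ge0 (ltW hlam1) (ler0n R 2)) q2.
have hC : FF L (lr, ls) <= FF L x + C * t.
  rewrite /C; move: hp; simpl; nra.
have eta2 : etan R N ^+ 2 <= etan R N by rewrite expr2 ler_piMr // ltW.
have : FF L (lr, ls) < ELL L + (1 + C * c0) * etan R N.
  apply: le_lt_trans hC _; rewrite /t; nra.
move=> h; apply: ltW; apply: lt_le_trans h _; rewrite lerD2l.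
move: eN2; rewrite ltr_pdivlMr // => h2; nra.
Qed.

Notation D := (fnorm d).
Notation rho := (fnorm d / Num.sqrt lam1).

Lemma rho_ge0 : 0 <= rho.
Proof. by rewrite divr_ge0 ?fnorm_ge0 ?sqrtr_ge0. Qed.

Lemma fnorm_r L x : XO L x -> fnorm x.1 <= rho.
Proof.
move=> /X0_bounds [_ h]; apply: sq_le_norm; first exact: rho_ge0.
rewrite expr_div_n (sqr_sqrtr (ltW hlam1)) fnorm_sq ler_pdivlMr //.
by rewrite fnorm_sq mulrC.
Qed.

Lemma fnorm_e L x : XO L x -> fnorm (ee L x) <= D.
Proof.
move=> /X0_bounds [h _]; apply: sq_le_norm; first exact: fnorm_ge0.
by rewrite !fnorm_sq.
Qed.

Lemma fnorm_grad L x : XO L x -> fnorm (grad L x) <= D * rho.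
Proof.
move=> hx; rewrite grad_E fnormN; apply: le_trans (fnorm_mulmx _ _) _.
rewrite fnorm_tr; apply: ler_pM; rewrite ?fnorm_ge0 //.
  exact: fnorm_e hx.
exact: fnorm_r hx.
Qed.

Lemma gap_bound L Y xL xY : XO L xL -> XO Y xY ->
  gap L xY xL <= 4 * (2 * (D * rho) * fnorm (Y - L) + rho ^+ 2 * fnorm (Y - L) ^+ 2).
Proof.
move=> hL hY; set H := Y - L; set h := fnorm H.
have eY : Y = L + H by rewrite /H addrC subrK.
have eL : L = Y + - H by rewrite /H opprB addrC subrK.
have s1 := strong xY hL.
have s2 : FF L xY = FF Y xY + mdot (grad Y xY) (- H) + 2^-1 * NN (- H *m xY.1).
  by rewrite -FF_shift -eL.
have s3 : FF Y xL = FF L xL + mdot (grad L xL) H + 2^-1 * NN (H *m xL.1).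
  by rewrite eY FF_shift.
have s4 : FF Y xY <= FF Y xL := hY xL.1 xL.2.
have s5 := X0_ell hL.
rewrite mdotNr mulNmx NNN in s2.
have b1 : mdot (grad L xL) H <= D * rho * h.
  by apply: le_trans (mdot_le _ _) _; apply: ler_wpM2r; [exact: fnorm_ge0 | exact: fnorm_grad].
have b2 : - mdot (grad Y xY) H <= D * rho * h.
  rewrite -mdotNl; apply: le_trans (mdot_le _ _) _; rewrite fnormN.
  by apply: ler_wpM2r; [exact: fnorm_ge0 | exact: fnorm_grad].
have b3 : forall x, XO Y x \/ XO L x -> NN (H *m x.1) <= rho ^+ 2 * h ^+ 2.
  move=> x hx; rewrite /NN -fnorm_sq -exprMn mulrC; apply: sq_mono; first exact: fnorm_ge0.
  apply: le_trans (fnorm_mulmx _ _) _; apply: ler_wpM2l; first exact: fnorm_ge0.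
  by case: hx => hx; apply: fnorm_r hx.
have b4 := b3 xY (or_introl hY); have b5 := b3 xL (or_intror hL).
lra.
Qed.

Lemma mdot_neg_le m n (A B : 'M[R]_(m, n)) : - mdot A B <= fnorm A * fnorm B.
Proof. by rewrite -mdotNl -(fnormN A); exact: mdot_le. Qed.

Lemma grad_diff L Y xL xY V : XO L xL -> XO Y xY ->
  mdot (grad Y xY) V - mdot (grad L xL) V <=
  (fnorm (Y - L) * rho + fnorm (L *m (xY.1 - xL.1) + (xY.2 - xL.2))) * (fnorm V * rho)
  + D * (fnorm V * fnorm (xY.1 - xL.1)).
Proof.
move=> hL hY; set H := Y - L; set h := fnorm H; set w := L *m (xY.1 - xL.1) + (xY.2 - xL.2).
have eY : Y = L + H by rewrite /H addrC subrK.
have ed : ee Y xY - ee L xL = - (H *m xY.1) - w.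
  rewrite eY ee_shift -ee_diff -/w.
  by rewrite addrAC addrC addrA.
rewrite !grad_E !mdotNl !mdot_outer.
have -> : - mdot (ee Y xY) (V *m xY.1) - - mdot (ee L xL) (V *m xL.1) =
    - mdot (ee Y xY - ee L xL) (V *m xY.1) - mdot (ee L xL) (V *m (xY.1 - xL.1)).
  by rewrite mulmxBr mdotBl mdotBr; ring.
have b1 := mdot_neg_le (ee Y xY - ee L xL) (V *m xY.1).
have b2 := mdot_neg_le (ee L xL) (V *m (xY.1 - xL.1)).
have b3 : fnorm (ee Y xY - ee L xL) <= h * rho + fnorm w.
  rewrite ed; apply: le_trans (fnormD _ _) _; rewrite !fnormN lerD2r.
  apply: le_trans (fnorm_mulmx _ _) _; apply: ler_wpM2l; first exact: fnorm_ge0.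
  exact: fnorm_r hY.
have b4 : fnorm (V *m xY.1) <= fnorm V * rho.
  apply: le_trans (fnorm_mulmx _ _) _; apply: ler_wpM2l; first exact: fnorm_ge0.
  exact: fnorm_r hY.
have b5 : fnorm (V *m (xY.1 - xL.1)) <= fnorm V * fnorm (xY.1 - xL.1) by exact: fnorm_mulmx.
have b6 := fnorm_e hL.
have b3' : fnorm (ee Y xY - ee L xL) * fnorm (V *m xY.1) <= (h * rho + fnorm w) * (fnorm V * rho).
  by apply: ler_pM; rewrite ?fnorm_ge0.
have b5' : fnorm (ee L xL) * fnorm (V *m (xY.1 - xL.1)) <= D * (fnorm V * fnorm (xY.1 - xL.1)).
  by apply: ler_pM; rewrite ?fnorm_ge0.
lra.
Qed.

Lemma grad_cont L xL V e : XO L xL -> 0 < e -> exists del, 0 < del /\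
  forall Y xY, fnorm (Y - L) < del -> XO Y xY -> mdot (grad Y xY) V <= mdot (grad L xL) V + e.
Proof.
move=> hL e0.
have r0 := rho_ge0; have D0 : 0 <= D := fnorm_ge0 d; have V0 := fnorm_ge0 V.
pose c := 4 * (2 * (D * rho) + rho ^+ 2).
have c0 : 0 <= c by rewrite /c mulr_ge0 // addr_ge0 ?sqr_ge0 // mulr_ge0 // mulr_ge0.
pose K := (rho + Num.sqrt c) * (fnorm V * rho) + D * (fnorm V * Num.sqrt (c / lam1)).
have K0 : 0 <= K by rewrite /K addr_ge0 // !mulr_ge0 ?addr_ge0 ?sqrtr_ge0.
have K1 : 0 < K + 1 by lra.
pose q := e / (K + 1).
have q0 : 0 < q by rewrite divr_gt0.
exists (Num.min 1 (q ^+ 2)); split; first by rewrite lt_min ltr01 /= expr2 mulr_gt0.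
move=> Y xY; rewrite lt_min => /andP [h1 h2] hY.
set h := fnorm (Y - L) in h1 h2 *.
have h0 : 0 <= h by exact: fnorm_ge0.
set sh := Num.sqrt h.
have sh0 : 0 <= sh by exact: sqrtr_ge0.
have shh : sh ^+ 2 = h by rewrite sqr_sqrtr.
have sh1 : sh <= 1 by rewrite -sqrtr1 ler_wsqrtr // ltW.
have hsh : h <= sh by rewrite -shh expr2 ler_piMr.
have shq : sh < q.
  have : sh < Num.sqrt (q ^+ 2) by rewrite ltr_sqrt // expr2 mulr_gt0.
  by rewrite sqrtr_sqr gtr0_norm.
have g1 : gap L xY xL <= c * sh ^+ 2.
  apply: le_trans (gap_bound hL hY) _; rewrite shh /c -/h.
  have : h ^+ 2 <= h by rewrite expr2 ler_piMr // ltW.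
  have := sqr_ge0 rho; have := mulr_ge0 D0 r0; nra.
have g2 := NN_ge0 (L *m (xY.1 - xL.1) + (xY.2 - xL.2)).
have g3 := mulr_ge0 (ltW hlam1) (NN_ge0 (xY.1 - xL.1)).
move: g1; rewrite /gap => g1.
have fw : fnorm (L *m (xY.1 - xL.1) + (xY.2 - xL.2)) <= Num.sqrt c * sh.
  apply: sqrt_bound2; [exact: fnorm_ge0 | exact: c0 | exact: sh0 |].
  by rewrite fnorm_sq -/(NN _); lra.
have fr : fnorm (xY.1 - xL.1) <= Num.sqrt (c / lam1) * sh.
  apply: sqrt_bound2; [exact: fnorm_ge0 | by rewrite divr_ge0 // ltW | exact: sh0 |].
  rewrite fnorm_sq -/(NN _) mulrAC ler_pdivlMr //; lra.
have gd := grad_diff V hL hY; rewrite -/h in gd.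
have t1 : (h * rho + fnorm (L *m (xY.1 - xL.1) + (xY.2 - xL.2))) * (fnorm V * rho)
   <= (rho + Num.sqrt c) * sh * (fnorm V * rho).
  apply: ler_wpM2r; first by rewrite mulr_ge0.
  have := ler_wpM2r r0 hsh; lra.
have t2 := ler_wpM2l D0 (ler_wpM2l V0 fr).
have t3 : K * sh <= e.
  apply: le_trans (_ : K * q <= e).
    by apply: ler_wpM2l => //; exact: ltW.
  rewrite /q mulrA ler_pdivrMr //; lra.
have : mdot (grad Y xY) V - mdot (grad L xL) V <= K * sh.
  have -> : K * sh = (rho + Num.sqrt c) * sh * (fnorm V * rho) + D * (fnorm V * (Num.sqrt (c / lam1) * sh)) by rewrite /K; ring.
  lra.
lra.
Qed.

Notation f := (fun L' => ELL L').

Lemma grad_in_clarke L xL : XO L xL -> clarke_subdiff f L (grad L xL).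
Proof.
move=> hL V eps delta eps0 del0.
pose q := NN (V *m xL.1).
have q0 : 0 <= q := NN_ge0 _.
have V0 := fnorm_ge0 V.
have V1 : 0 < fnorm V + 1 by lra.
have q1 : 0 < q + 1 by lra.
pose t := Num.min (delta / 2 / (fnorm V + 1)) (eps / (q + 1)).
have ta : t <= delta / 2 / (fnorm V + 1) by rewrite /t ge_min lexx.
have tb : t <= eps / (q + 1) by rewrite /t ge_min lexx orbT.
have t0 : 0 < t by rewrite /t lt_min !divr_gt0.
clearbody t.
exists (L - t *: V), t; split; last split.
- rewrite addrAC subrr add0r fnormN fnormZ gtr0_norm //.
  move: ta; rewrite ler_pdivlMr // => ta; have := mulr_ge0 (ltW t0) V0; lra.
- rewrite t0 /=; move: ta; rewrite ler_pdivlMr // => ta; have := mulr_ge0 (ltW t0) V0; lra.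
- rewrite subrK.
  rewrite -(X0_ell hL) ler_pdivlMr //.
  have hF : ELL (L - t *: V) <= FF (L - t *: V) xL by exact: ell_le.
  rewrite FF_shift mdotNr mdotZr mulNmx NNN -scalemxAl NNZ -/q in hF.
  move: tb; rewrite ler_pdivlMr // => tb.
  have h1 : t * q <= eps by lra.
  have h2 := ler_wpM2r (ltW t0) h1.
  rewrite expr2 in hF.
  have := mulr_ge0 (mulr_ge0 (ltW t0) (ltW t0)) q0; lra.
Qed.

Lemma clarke_sub L xL xi : XO L xL -> clarke_subdiff f L xi -> xi = grad L xL.
Proof.
move=> hL hxi; set V := xi - grad L xL.
suff : mdot xi V <= mdot (grad L xL) V.
  rewrite -subr_le0 -mdotBl -/V => h.
  have hV : V = 0 by apply: mdot_eq0; apply/eqP; rewrite eq_le h mdot_ge0.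
  by apply/eqP; rewrite -subr_eq0 -/V hV.
apply/ler_addgt0Pr => e e0.
have e3 : 0 < e / 3 by rewrite divr_gt0.
have [d1 [d10 hd1]] := grad_cont V hL e3.
pose q := (fnorm V * rho) ^+ 2.
have q0 : 0 <= q := sqr_ge0 _.
have q1 : 0 < q + 1 by rewrite ltr_pwDr.
have n1 : forall Y0 x, XO Y0 x -> NN (V *m x.1) <= q.
  move=> Y0 x hx; rewrite /NN -fnorm_sq; apply: sq_mono; first exact: fnorm_ge0.
  apply: le_trans (fnorm_mulmx _ _) _; apply: ler_wpM2l; first exact: fnorm_ge0.
  exact: fnorm_r hx.
clearbody q.
have dpos : 0 < Num.min d1 (e / 3 / (q + 1)) by rewrite lt_min d10 divr_gt0.
have [Y [t [hY [/andP [t0 td] hq]]]] := hxi V (e / 3) (Num.min d1 (e / 3 / (q + 1))) e3 dpos.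
move: hY td; rewrite !lt_min => /andP [hY1 _] /andP [td1 td2].
have [xY hxY] := exists_min Y.
have g1 := hd1 Y xY hY1 hxY.
have f1 : ELL (Y + t *: V) <= FF (Y + t *: V) xY by exact: ell_le.
rewrite FF_shift mdotZr -scalemxAl NNZ (X0_ell hxY) in f1.
have n1' := n1 _ _ hxY.
move: hq; rewrite ler_pdivlMr // => hq.
move: td2; rewrite ltr_pdivlMr // => td2.
have k1 := ler_wpM2l (ltW t0) g1.
have k2 : t ^+ 2 * NN (V *m xY.1) <= t ^+ 2 * q.
  by apply: ler_wpM2l => //; exact: sqr_ge0.
have k3 : t * q <= e / 3.
  apply: le_trans (ltW td2); apply: ler_wpM2l; [exact: ltW t0 | by rewrite lerDl].
have key : t * (mdot xi V - mdot (grad L xL) V - e / 3 - e / 3 - t / 2 * q) <= 0.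
  rewrite expr2 in k2 f1.
move: hq f1 k1 k2; move: (mdot xi V) (mdot (grad L xL) V) (mdot (grad Y xY) V) (NN (V *m xY.1)) (ELL (Y + t *: V)) (ELL Y) => a b c n u v.
move=> *; lra.
rewrite pmulr_rle0 // in key.
have k4 : t / 2 * q <= e / 3.
  apply: le_trans k3; rewrite mulrAC ler_pdivrMr // ler_peMr //; last by rewrite ler1n.
  by rewrite mulr_ge0 // ltW.
clear -key k4; lra.
Qed.

Lemma clarke_eq L xL : XO L xL -> clarke_subdiff f L = [set grad L xL].
Proof.
move=> hL; apply/seteqP; split => xi.
  by move=> h; rewrite /= (clarke_sub hL h).
by move=> /= ->; exact: grad_in_clarke.
Qed.

Lemma conv_eq L xL : XO L xL ->
  conv_hull [set (L *m rs.1 + rs.2 - d) *m rs.1^T | rs in XO L] = [set grad L xL].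
Proof.
move=> hL; apply/seteqP; split => X.
  move=> [k [w [P [w0 [w1 [hP ->]]]]]] /=.
  have -> : \sum_(i < k) w i *: P i = \sum_(i < k) w i *: grad L xL.
    apply: eq_bigr => i _; have [rs hrs <-] := hP i.
    by rewrite (X0_unique hrs hL).
  by rewrite -scaler_suml w1 scale1r.
move=> /= ->; exists 1%N, (fun _ => 1), (fun _ => grad L xL).
split; first by move=> i; exact: ler01.
split; first by rewrite big_ord1.
split; first by move=> i; exists xL.
by rewrite big_ord1 scale1r.
Qed.

Lemma ell_lip L1 L2 : ELL L1 - ELL L2 <=
  D * rho * fnorm (L1 - L2) + 2^-1 * (rho ^+ 2 * fnorm (L1 - L2) ^+ 2).
Proof.
have [x2 h2] := exists_min L2.
set H := L1 - L2.
have e1 : L1 = L2 + H by rewrite /H addrC subrK.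
have h := ell_le L1 x2; rewrite [in FF _ _]e1 FF_shift (X0_ell h2) in h.
have b1 : mdot (grad L2 x2) H <= D * rho * fnorm H.
  by apply: le_trans (mdot_le _ _) _; apply: ler_wpM2r; [exact: fnorm_ge0 | exact: fnorm_grad].
have b2 : NN (H *m x2.1) <= rho ^+ 2 * fnorm H ^+ 2.
  rewrite /NN -fnorm_sq -exprMn mulrC; apply: sq_mono; first exact: fnorm_ge0.
  apply: le_trans (fnorm_mulmx _ _) _; apply: ler_wpM2l; first exact: fnorm_ge0.
  exact: fnorm_r h2.
rewrite lerBlDl; apply: le_trans h _; rewrite -addrA lerD2l; apply: lerD => //.
by apply: ler_wpM2l => //; rewrite invr_ge0.
Qed.

End Main.

Unset Implicit Arguments. Set Strict Implicit.

Lemma cb {R : realType} {p r : nat} {Lset : set 'M[R]_(p, r)} : compact Lset ->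
  exists B : R, 0 <= B /\ forall L, Lset L -> forall i j, `|L i j| <= B.
Proof.
move=> /compact_bounded [B [Br HB]].
exists (`|B| + 1); split => //.
move=> L HL i j.
have := HB (`|B| + 1).
have h : B < `|B| + 1 by rewrite (le_lt_trans (ler_norm _)) // ltrDl.
move=> /(_ h L HL); apply: le_trans.
rewrite /Num.norm /= mx_normrE.
exact: (le_bigmax _ (fun ij : _ * _ => `|L ij.1 ij.2|) (i, j)).
Qed.

Theorem proposition3 (R : realType) (p r : nat) (lam1 lam2 : R)
  (G : {set {set 'I_p}}) (hlam1 : 0 < lam1) (hlam2 : 0 < lam2) :
  (* (1) sub-gradient formula, for every d and L *)
  (forall (d : 'cV[R]_p) (L : 'M[R]_(p, r)),
     clarke_subdiff (fun L' => ell lam1 lam2 G d L') L =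
     conv_hull [set (L *m rs.1 + rs.2 - d) *m rs.1^T
               | rs in X0 lam1 lam2 G d L]) /\
  (* (2) uniform boundedness of the sub-gradient and uniform Lipschitzness,
     for d in a bounded set and L in a compact set *)
  (forall (M : R) (Lset : set 'M[R]_(p, r)), compact Lset ->
     (exists C : R, forall (d : 'cV[R]_p) (L : 'M[R]_(p, r)) xi,
        fnorm d <= M -> Lset L ->
        clarke_subdiff (fun L' => ell lam1 lam2 G d L') L xi ->
        fnorm xi <= C) /\
     (exists K : R, forall (d : 'cV[R]_p) (L1 L2 : 'M[R]_(p, r)),
        fnorm d <= M -> Lset L1 -> Lset L2 ->
        `|ell lam1 lam2 G d L1 - ell lam1 lam2 G d L2| <= K * fnorm (L1 - L2))).
Proof.
have s0 : 0 < Num.sqrt lam1 by rewrite sqrtr_gt0.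
have is0 : 0 <= (Num.sqrt lam1)^-1 by rewrite invr_ge0 ltW.
split.
  move=> d L; have [xL hL] := exists_min hlam1 hlam2 G d L.
  by rewrite (clarke_eq hlam1 hlam2 hL) (conv_eq hlam1 hlam2 hL).
move=> M Lset cL; split.
  exists (M * (M / Num.sqrt lam1)) => d L xi hd _ hxi.
  have [xL hL] := exists_min hlam1 hlam2 G d L.
  rewrite (clarke_sub hlam1 hlam2 hL hxi).
  apply: le_trans (fnorm_grad hlam1 hlam2 hL) _.
  have D0 := fnorm_ge0 d.
  apply: ler_pM => //; first by rewrite mulr_ge0.
  exact: ler_wpM2r.
have [B [B0 hB]] := cb cL.
pose B' := (p * r)%:R * B.
have hB' : forall L, Lset L -> fnorm L <= B'.
  by move=> L hL; apply: fnorm_entries => //; exact: hB.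
pose rM := M / Num.sqrt lam1.
exists (M * rM + B' * rM ^+ 2) => d L1 L2 hd h1 h2.
set h := fnorm (L1 - L2).
have h0 : 0 <= h by exact: fnorm_ge0.
have hh : h <= 2 * B'.
  apply: le_trans (fnormD _ _) _; rewrite fnormN mulr2n mulrDl mul1r.
  by apply: lerD; [exact: hB' | exact: hB'].
have hsym : fnorm (L2 - L1) = h by rewrite -opprB fnormN.
have l1 := ell_lip hlam1 hlam2 G d L1 L2; have l2 := ell_lip hlam1 hlam2 G d L2 L1.
rewrite hsym -/h in l2; rewrite -/h in l1.
have D0 := fnorm_ge0 d.
have r0 : 0 <= fnorm d / Num.sqrt lam1 by rewrite mulr_ge0.
have rr : fnorm d / Num.sqrt lam1 <= rM by exact: ler_wpM2r.
have q1 : fnorm d * (fnorm d / Num.sqrt lam1) * h <= M * rM * h.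
  by apply: ler_wpM2r => //; apply: ler_pM.
have q2 : 2^-1 * ((fnorm d / Num.sqrt lam1) ^+ 2 * h ^+ 2) <= B' * rM ^+ 2 * h.
  have a1 : (fnorm d / Num.sqrt lam1) ^+ 2 <= rM ^+ 2 by exact: sq_mono.
  have a2 : h ^+ 2 <= 2 * B' * h by rewrite expr2; exact: ler_wpM2r.
  have a3 := ler_pM (sqr_ge0 _) (sqr_ge0 _) a1 a2.
  apply: le_trans (ler_wpM2l _ a3) _; first by rewrite invr_ge0.
  have -> : 2^-1 * (rM ^+ 2 * (2 * B' * h)) = B' * rM ^+ 2 * h by field.
  exact: lexx.
rewrite ler_norml; apply/andP; split.
  by rewrite lerNl opprB; apply: le_trans l2 _; rewrite mulrDl; apply: lerD.
by apply: le_trans l1 _; rewrite mulrDl; apply: lerD.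
Qed.
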